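(* For every integer $v \ge 4$, \[ \beta(1,v,4) = \begin{cases} D(v,4) & \text{if } 4 \le v \le 13,\\ 13 & \text{if } 14 \le v \le 39,\\ \left\lfloor \frac{v-1}{3} \right\rfloor & \text{if } v \ge 40. \end{cases} \]
   Context: For integers $v \ge k \ge 2$, a $(v,k)$-packing is a pair $(X,\mathcal{B})$ where $X$ is a set of $v$ points and $\mathcal{B}$ is a set of $k$-subsets of $X$ (blocks) such that every pair of distinct points lies in at most one block. $D(v,k)$ denotes the maximum number of blocks in a $(v,k)$-packing. A partial parallel class (PPC) is a set of pairwise disjoint blocks; its size is the number of blocks. A PPC of size $\rho$ is maximum if the packing has no PPC of size $\rho+1$. $\beta(\rho,v,k)$ denotes the maximum number of blocks in a $(v,k)$-packing in which the maximum PPC has size $\rho$; thus $\beta(1,v,4)$ is the maximum number of blocks in a $(v,4)$-packing in which no two blocks are disjoint. *)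

(* Defs.v *)
From mathcomp Require Import all_boot all_order.
Set Implicit Arguments. Unset Strict Implicit. Unset Printing Implicit Defensive.

Definition packing (v k : nat) (B : {set {set 'I_v}}) : bool :=
  [forall b in B, #|b| == k] &&
  [forall x : 'I_v, forall y : 'I_v,
     (x != y) ==> (#|[set b in B | (x \in b) && (y \in b)]| <= 1)].

Definition ppc (v : nat) (B P : {set {set 'I_v}}) : bool :=
  (P \subset B) &&
  [forall b1 in P, forall b2 in P, (b1 != b2) ==> [disjoint b1 & b2]].

Definition max_ppc (v : nat) (B : {set {set 'I_v}}) : nat :=
  \max_(P : {set {set 'I_v}} | ppc B P) #|P|.

Definition D (v k : nat) : nat :=
  \max_(B : {set {set 'I_v}} | packing k B) #|B|.

Definition beta (rho v k : nat) : nat :=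
  \max_(B : {set {set 'I_v}} | packing k B && (max_ppc B == rho)) #|B|.

(* Main.v *)
Require Import Defs.
From mathcomp Require Import all_boot all_order zify.
Set Implicit Arguments. Unset Strict Implicit.

Lemma dcount {T : finType} (B : {set {set T}}) (A : {set T}) :
  \sum_(c in B) #|c :&: A| = \sum_(x in A) #|[set c in B | x \in c]|.
Proof.
have E1 : forall c : {set T}, #|c :&: A| = \sum_(x in A) (x \in c : nat).
  move=> c; rewrite -sum1_card big_mkcond /= [RHS]big_mkcond /=.
  apply: eq_bigr => x _; rewrite inE; by case: (x \in c); case: (x \in A).
have E2 : forall x, #|[set c in B | x \in c]| = \sum_(c in B) (x \in c : nat).
  move=> x; rewrite -sum1_card big_mkcond /= [RHS]big_mkcond /=.
  apply: eq_bigr => c _; rewrite inE; by case: (x \in c); case: (c \in B).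
rewrite (eq_bigr _ (fun c _ => E1 c)) exchange_big /=.
by apply: eq_bigr => x _; rewrite E2.
Qed.

Lemma pack_card v (B : {set {set 'I_v}}) b : packing 4 B -> b \in B -> #|b| = 4.
Proof. by case/andP=> /forall_inP H _ /H /eqP. Qed.

Lemma pack_pair v (B : {set {set 'I_v}}) x y : packing 4 B -> x != y ->
  #|[set c in B | (x \in c) && (y \in c)]| <= 1.
Proof. by case/andP=> _ /forallP/(_ x)/forallP/(_ y)/implyP H /H. Qed.

Lemma pack_lin v (B : {set {set 'I_v}}) b1 b2 : packing 4 B -> b1 \in B -> b2 \in B ->
  b1 != b2 -> #|b1 :&: b2| <= 1.
Proof.
move=> hP h1 h2 hne; rewrite leqNgt; apply/negP => /card_gt1P [x [y [hx hy hxy]]].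
have := @pack_pair _ _ x y hP hxy.
move: hx hy; rewrite !inE => /andP[x1 x2] /andP[y1 y2].
rewrite leqNgt => /negP; apply; apply/card_gt1P; exists b1, b2.
by rewrite !inE h1 h2 x1 x2 y1 y2 hne.
Qed.

Lemma pack_build v (B : {set {set 'I_v}}) :
  (forall b, b \in B -> #|b| = 4) ->
  (forall b1 b2, b1 \in B -> b2 \in B -> b1 != b2 -> #|b1 :&: b2| <= 1) ->
  packing 4 B.
Proof.
move=> H1 H2; apply/andP; split.
  by apply/forall_inP => b /H1 ->.
apply/forallP => x; apply/forallP => y; apply/implyP => hxy.
rewrite leqNgt; apply/negP => /card_gt1P [b1 [b2 [hb1 hb2 hne]]].
move: hb1 hb2; rewrite !inE => /and3P[i1 x1 y1] /and3P[i2 x2 y2].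
have := H2 _ _ i1 i2 hne.
suff : 1 < #|b1 :&: b2| by move=> h1 h2; move: (leq_trans h1 h2).
apply/card_gt1P; exists x, y; by rewrite !inE x1 x2 y1 y2 hxy.
Qed.

Lemma ppc_int v (B : {set {set 'I_v}}) b1 b2 : max_ppc B = 1 -> b1 \in B -> b2 \in B ->
  b1 != b2 -> ~~ [disjoint b1 & b2].
Proof.
move=> hm h1 h2 hne; apply/negP => hd.
have hp : ppc B [set b1; b2].
  apply/andP; split.
    by apply/subsetP => c; rewrite !inE => /orP[]/eqP->.
  apply/forall_inP => c1; rewrite !inE => hc1; apply/forall_inP => c2; rewrite !inE => hc2.
  apply/implyP => hc.
  case/orP: hc1 => /eqP e1; case/orP: hc2 => /eqP e2; subst; rewrite ?eqxx // in hc.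
  by rewrite disjoint_sym.
have := @leq_bigmax_cond _ (ppc B) (fun P => #|P|) _ hp.
by rewrite -/(max_ppc B) hm cards2 hne.
Qed.

Lemma ppc_one v (B : {set {set 'I_v}}) : B != set0 ->
  (forall b1 b2, b1 \in B -> b2 \in B -> b1 != b2 -> ~~ [disjoint b1 & b2]) ->
  max_ppc B = 1.
Proof.
move=> hB hI; apply/eqP; rewrite eqn_leq; apply/andP; split.
  apply/bigmax_leqP => P /andP[/subsetP hs /forall_inP hd].
  rewrite leqNgt; apply/negP => /card_gt1P [b1 [b2 [i1 i2 hne]]].
  have := hd _ i1 => /forall_inP /(_ _ i2) /implyP /(_ hne).
  by apply/negP; apply: hI => //; apply: hs.
case/set0Pn: hB => b hb.
have hp : ppc B [set b].
  apply/andP; split; first by rewrite sub1set.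
  apply/forall_inP => c1; rewrite inE => /eqP->; apply/forall_inP => c2; rewrite inE => /eqP->.
  by rewrite eqxx.
by have := @leq_bigmax_cond _ (ppc B) (fun P => #|P|) _ hp; rewrite cards1.
Qed.

Lemma deg_bound v (B : {set {set 'I_v}}) x : packing 4 B ->
  3 * #|[set c in B | x \in c]| <= v - 1.
Proof.
move=> hP; set Bx := [set c in B | x \in c].
have := dcount Bx [set~ x].
rewrite (eq_bigr (fun _ => 3)); last first.
  move=> c; rewrite inE => /andP[hc hx].
  rewrite -setDE.
  have := cardsD1 x c; rewrite hx (pack_card hP hc) => /eqP; rewrite eqSS => /eqP <-.
  by [].
rewrite sum_nat_const mulnC => ->.
apply: (@leq_trans (\sum_(y in [set~ x]) 1)); last by rewrite sum1_card cardsC1 card_ord subn1.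
apply: leq_sum => y; rewrite !inE => hy.
apply: leq_trans (@pack_pair _ _ y x hP hy).
apply: subset_leq_card; apply/subsetP => c; rewrite !inE.
by case/andP => /andP[-> ->] ->.
Qed.

Definition inters v (B : {set {set 'I_v}}) :=
  forall b1 b2, b1 \in B -> b2 \in B -> b1 != b2 -> ~~ [disjoint b1 & b2].

Lemma inters_pos v (B : {set {set 'I_v}}) b1 b2 : inters B -> b1 \in B -> b2 \in B ->
  b1 != b2 -> 0 < #|b1 :&: b2|.
Proof. by move=> hI h1 h2 hne; rewrite card_gt0 setI_eq0; apply: hI. Qed.

Lemma nonstar_deg v (B : {set {set 'I_v}}) q b : packing 4 B -> inters B ->
  b \in B -> q \notin b -> #|[set c in B | q \in c]| <= 4.
Proof.
move=> hP hI hb hq; set Bq := [set c in B | q \in c].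
have := dcount Bq b.
have L : #|Bq| <= \sum_(c in Bq) #|c :&: b|.
  rewrite -sum1_card; apply: leq_sum => c; rewrite inE => /andP[hc hqc].
  apply: inters_pos hI hc hb _; apply/eqP => e; subst; by rewrite hqc in hq.
move=> E; rewrite E in L; apply: leq_trans L _.
rewrite -(pack_card hP hb) -sum1_card; apply: leq_sum => y hy.
have hyq : y != q by apply/eqP => e; subst; rewrite hy in hq.
apply: leq_trans (@pack_pair _ _ y q hP hyq).
apply: subset_leq_card; apply/subsetP => c; rewrite !inE.
by case/andP => /andP[-> ->] ->.
Qed.

Lemma ub v (B : {set {set 'I_v}}) : packing 4 B -> max_ppc B = 1 ->
  #|B| <= maxn 13 ((v - 1) %/ 3).
Proof.
move=> hP hm.
have hI : inters B by move=> b1 b2; exact: ppc_int.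
case: (boolP [exists p, [forall b in B, p \in b]]).
  case/existsP => p /forall_inP hp.
  have := @deg_bound _ _ p hP.
  have -> : [set c in B | p \in c] = B.
    by apply/setP => c; rewrite inE; case: (boolP (c \in B)) => // /hp ->.
  move=> h; apply: leq_trans (leq_maxr _ _); lia.
rewrite negb_exists => /forallP hn.
case: (set_0Vmem B) => [-> | [b0 hb0]]; first by rewrite cards0.
apply: leq_trans (leq_maxl _ _).
have := dcount B b0.
have U : \sum_(x in b0) #|[set c in B | x \in c]| <= 16.
  apply: (@leq_trans (\sum_(x in b0) 4)); last by rewrite sum_nat_const (pack_card hP hb0).
  apply: leq_sum => x _.
  have := hn x; rewrite negb_forall_in => /exists_inP [b hb hx].
  exact: nonstar_deg hP hI hb hx.
have L : \sum_(c in B) 1 + 3 <= \sum_(c in B) #|c :&: b0|.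
  rewrite (bigD1 b0) //= [X in _ <= X](bigD1 b0) //= setIid (pack_card hP hb0).
  have -> : 1 + \sum_(i in B | i != b0) 1 + 3 = 4 + \sum_(i in B | i != b0) 1 by lia.
  rewrite leq_add2l; apply: leq_sum => c /andP[hc hne].
  exact: inters_pos hI hc hb0 hne.
rewrite sum1_card in L; move=> E; rewrite E in L; lia.
Qed.

Lemma disj_bound v (B : {set {set 'I_v}}) b1 b2 : packing 4 B -> b1 \in B -> b2 \in B ->
  b1 != b2 -> [disjoint b1 & b2] -> 8 <= v /\ 2 * (#|B| - 2) <= (v - 8) * ((v - 1) %/ 3).
Proof.
move=> hP h1 h2 hne hd.
have c1 := pack_card hP h1; have c2 := pack_card hP h2.
have cU : #|b1 :|: b2| = 8.
  have e : b1 :&: b2 = set0 by apply/eqP; rewrite setI_eq0.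
  by rewrite cardsU c1 c2 e cards0.
have v8 : 8 <= v by rewrite -cU -[X in _ <= X](card_ord v) -cardsT; apply: subset_leq_card; apply: subsetT.
split => //.
set R := ~: (b1 :|: b2).
have cR : #|R| = v - 8 by rewrite cardsCs setCK card_ord cU.
set B' := B :\ b1 :\ b2.
have cB : #|B| = #|B'| + 2.
  have := cardsD1 b1 B; have := cardsD1 b2 (B :\ b1).
  rewrite !inE h1 h2 eq_sym hne /= /B'; lia.
have := dcount B' R.
have L : 2 * #|B'| <= \sum_(c in B') #|c :&: R|.
  rewrite mulnC -sum_nat_const.
  apply: leq_sum => c; rewrite !inE => /and3P[n2 n1 hc].
  have l1 := pack_lin hP hc h1 n1; have l2 := pack_lin hP hc h2 n2.
  have := cardsID (b1 :|: b2) c; rewrite (pack_card hP hc) setDE -/R setIUr.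
  have := cardsUI (c :&: b1) (c :&: b2); lia.
move=> E; rewrite E in L.
have U : \sum_(x in R) #|[set c in B' | x \in c]| <= (v - 8) * ((v - 1) %/ 3).
  rewrite -cR -sum_nat_const; apply: leq_sum => x _.
  have := @deg_bound _ _ x hP.
  have : #|[set c in B' | x \in c]| <= #|[set c in B | x \in c]|.
    apply: subset_leq_card; apply/subsetP => c; rewrite !inE; by case/andP => /and3P[_ _ ->] ->.
  lia.
rewrite cB; lia.
Qed.

Definition blk v (l : seq nat) : {set 'I_v} := [set i : 'I_v | val i \in l].

Lemma card_blk v l : all (fun x => x < v) l -> uniq l -> #|blk v l| = size l.
Proof.
move=> ha hu.
rewrite /blk -sum1dep_card -(big_mkord (fun i => i \in l) (fun _ => 1)).
rewrite /index_iota subn0 sum1_count -size_filter.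
apply: perm_size; apply: uniq_perm; first by rewrite filter_uniq // iota_uniq.
  done.
move=> x; rewrite mem_filter mem_iota /= add0n.
case: (boolP (x \in l)) => //= hx; by rewrite (allP ha x hx).
Qed.

Lemma blkI v l1 l2 : blk v l1 :&: blk v l2 = blk v [seq x <- l1 | x \in l2].
Proof. by apply/setP => i; rewrite !inE mem_filter andbC. Qed.

Lemma beta_lb v (B : {set {set 'I_v}}) : packing 4 B -> max_ppc B = 1 -> #|B| <= beta 1 v 4.
Proof.
move=> hP hm.
have hB : packing 4 B && (max_ppc B == 1) by rewrite hP hm eqxx.
exact: (@leq_bigmax_cond _ (fun B => packing 4 B && (max_ppc B == 1)) (fun B => #|B|) _ hB).
Qed.

Lemma construct v (ls : seq (seq nat)) :
  uniq ls -> ls != [::] ->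
  (forall l, l \in ls -> [&& all (fun x => x < v) l, uniq l & size l == 4]) ->
  (forall l1 l2, l1 \in ls -> l2 \in ls -> l1 != l2 -> size [seq x <- l1 | x \in l2] == 1) ->
  size ls <= beta 1 v 4.
Proof.
move=> hu hne H1 H2.
set B := [set b in map (blk v) ls].
have memB : forall b, b \in B -> exists2 l, l \in ls & b = blk v l.
  by move=> b; rewrite inE => /mapP.
have cb : forall l, l \in ls -> #|blk v l| = 4.
  move=> l /H1 /and3P[a u /eqP s]; by rewrite card_blk.
have ci : forall l1 l2, l1 \in ls -> l2 \in ls -> l1 != l2 -> #|blk v l1 :&: blk v l2| = 1.
  move=> l1 l2 i1 i2 n; rewrite blkI card_blk.
  - exact/eqP/H2.
  - by apply/allP => x; rewrite mem_filter => /andP[_ hx]; move: (H1 _ i1) => /and3P[/allP ha _ _]; exact: ha.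
  - by rewrite filter_uniq //; case/and3P: (H1 _ i1).
have inj : {in ls &, injective (blk v)}.
  move=> l1 l2 i1 i2 e; apply/eqP; apply/negP => /negP n.
  by have := ci _ _ i1 i2 n; rewrite e setIid cb.
have cB : #|B| = size ls.
  rewrite cardsE.
  rewrite -(size_map (blk v) ls); apply/card_uniqP; by rewrite map_inj_in_uniq.
have ne : forall b1 b2, b1 \in B -> b2 \in B -> b1 != b2 -> #|b1 :&: b2| = 1.
  move=> b1 b2 /memB [l1 i1 ->] /memB [l2 i2 ->] n; apply: ci => //.
  by apply/negP => /eqP e; rewrite e eqxx in n.
have hP : packing 4 B.
  apply: pack_build.
    by move=> b /memB [l i ->]; apply: cb.
  by move=> b1 b2 h1 h2 n; rewrite ne.
rewrite -cB; apply: beta_lb hP _.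
apply: ppc_one.
  have [l0 hl0] : exists l0, l0 \in ls by case: (ls) hne => // l ? _; exists l; rewrite mem_head.
  by apply/set0Pn; exists (blk v l0); rewrite inE; apply: map_f.
move=> b1 b2 h1 h2 n; rewrite -setI_eq0 -card_gt0 ne //.
Qed.

Definition chk (w : nat) (ls : seq (seq nat)) : bool :=
  [&& uniq ls, ls != [::],
      all (fun l : seq nat => [&& all (fun x => x < w) l, uniq l & size l == 4]) ls &
      all (fun l1 : seq nat => all (fun l2 : seq nat => (l1 == l2) || (size [seq x <- l1 | x \in l2] == 1)) ls) ls].

Lemma construct_b v w ls : w <= v -> chk w ls -> size ls <= beta 1 v 4.
Proof.
move=> hw /and4P[hu hn /allP ha /allP hb]; apply: construct => //.
  move=> l /ha /and3P[/allP a u s]; rewrite u s !andbT; apply/allP => x /a h.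
  exact: leq_trans h hw.
move=> l1 l2 i1 i2 n; have := allP (hb _ i1) _ i2; by rewrite (negbTE n).
Qed.

Definition exl (v : nat) : seq (seq nat) :=
  match v with
  | 7 | 8 => [:: [:: 0; 1; 2; 3]; [:: 0; 4; 5; 6]]
  | 9 => [:: [:: 0; 1; 2; 3]; [:: 0; 4; 5; 6]; [:: 1; 4; 7; 8]]
  | 10 => [:: [:: 0; 1; 2; 3]; [:: 0; 4; 5; 6]; [:: 1; 4; 7; 8]; [:: 2; 5; 7; 9]; [:: 3; 6; 8; 9]]
  | 11 => [:: [:: 0; 2; 3; 4]; [:: 0; 5; 6; 7]; [:: 0; 8; 9; 10]; [:: 1; 2; 5; 8]; [:: 1; 3; 6; 9]; [:: 1; 4; 7; 10]]
  | 12 => [:: [:: 0; 1; 3; 9]; [:: 1; 2; 4; 10]; [:: 2; 3; 5; 11]; [:: 0; 4; 5; 7]; [:: 1; 5; 6; 8]; [:: 2; 6; 7; 9]; [:: 3; 7; 8; 10]; [:: 4; 8; 9; 11]; [:: 0; 6; 10; 11]]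
  | 13 => [:: [:: 0; 1; 3; 9]; [:: 1; 2; 4; 10]; [:: 2; 3; 5; 11]; [:: 3; 4; 6; 12]; [:: 0; 4; 5; 7]; [:: 1; 5; 6; 8]; [:: 2; 6; 7; 9]; [:: 3; 7; 8; 10]; [:: 4; 8; 9; 11]; [:: 5; 9; 10; 12]; [:: 0; 6; 10; 11]; [:: 1; 7; 11; 12]; [:: 0; 2; 8; 12]]
  | _ => [:: [:: 0; 1; 2; 3]]
  end.

Lemma exl_ok v : 4 <= v <= 13 -> size (exl v) <= beta 1 v 4.
Proof.
move=> hv; apply: (@construct_b v v) => //.
do 14! (case: v hv => [|v] hv; first by (lia || vm_compute)).
lia.
Qed.

Lemma exl_arith v b : 8 <= v <= 13 -> 2 * (b - 2) <= (v - 8) * ((v - 1) %/ 3) -> b <= size (exl v).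
Proof.
move=> hv.
do 14! (case: v hv => [|v] hv; first by (lia || (simpl; lia))).
lia.
Qed.

Definition star (n : nat) : seq (seq nat) :=
  [seq [:: 0; 3 * i + 1; 3 * i + 2; 3 * i + 3] | i <- iota 0 n].

Lemma star_ok v : 40 <= v -> (v - 1) %/ 3 <= beta 1 v 4.
Proof.
move=> hv; set n := (v - 1) %/ 3.
have hn : n * 3 <= v - 1 by apply: leq_divM.
have -> : n = size (star n) by rewrite size_map size_iota.
apply: construct.
- rewrite map_inj_uniq ?iota_uniq // => i j [] ; lia.
- rewrite -size_eq0 size_map size_iota -lt0n /n; lia.
- move=> l /mapP [i]; rewrite mem_iota => hi ->.
  rewrite /= !inE !andbT; apply/and4P; split; try lia.
- move=> l1 l2 /mapP [i]; rewrite mem_iota => hi -> /mapP [j]; rewrite mem_iota => hj -> hne.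
  have hij : i != j by apply/eqP => e; subst; rewrite eqxx in hne.
  rewrite /= !inE /=.
  have -> : [|| 3 * i + 1 == 0, 3 * i + 1 == 3 * j + 1, 3 * i + 1 == 3 * j + 2 | 3 * i + 1 == 3 * j + 3] = false by apply/negbTE; lia.
  have -> : [|| 3 * i + 2 == 0, 3 * i + 2 == 3 * j + 1, 3 * i + 2 == 3 * j + 2 | 3 * i + 2 == 3 * j + 3] = false by apply/negbTE; lia.
  have -> : [|| 3 * i + 3 == 0, 3 * i + 3 == 3 * j + 1, 3 * i + 3 == 3 * j + 2 | 3 * i + 3 == 3 * j + 3] = false by apply/negbTE; lia.
  by [].
Qed.
Unset Implicit Arguments.

Lemma beta_ub v N : (forall B : {set {set 'I_v}}, packing 4 B -> max_ppc B = 1 -> #|B| <= N) ->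
  beta 1 v 4 <= N.
Proof. move=> H; apply/bigmax_leqP => B /andP[hP /eqP hm]; exact: H. Qed.

Theorem theorem4p1 (v : nat) : 4 <= v ->
  beta 1 v 4 =
    (if v <= 13 then D v 4
     else if v <= 39 then 13
     else (v - 1) %/ 3).
Proof.
move=> hv.
case: ifP => h13.
  apply/eqP; rewrite eqn_leq; apply/andP; split.
    apply: beta_ub => B hP _.
    exact: (@leq_bigmax_cond _ (fun B => packing 4 B) (fun B => #|B|) _ hP).
  apply/bigmax_leqP => B hP.
  case: (boolP [exists b1 in B, exists b2 in B, (b1 != b2) && [disjoint b1 & b2]]).
    case/exists_inP => b1 h1 /exists_inP [b2 h2 /andP[hne hd]].
    have [h8 hb] := disj_bound hP h1 h2 hne hd.
    apply: leq_trans (exl_ok _); last by rewrite hv h13.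
    apply: exl_arith hb; by rewrite h8 h13.
  rewrite negb_exists_in => /forall_inP hn.
  case: (set_0Vmem B) => [-> | [b0 hb0]]; first by rewrite cards0.
  apply: beta_lb hP _; apply: ppc_one; first by apply/set0Pn; exists b0.
  move=> b1 b2 h1 h2 hne; have := hn _ h1; rewrite negb_exists_in => /forall_inP /(_ _ h2).
  by rewrite hne.
apply/eqP; rewrite eqn_leq; apply/andP; split.
  apply: beta_ub => B hP hm; have := ub hP hm; case: ifP => h39; lia.
case: ifP => h39.
  have h := @construct_b v 13 (exl 13); apply: h; [lia | by vm_compute].
apply: star_ok; lia.
Qed.
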